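(* Let $p$ be an odd prime, $m$ a positive integer, $q=p^m$. Let $l,r,s,e$ be positive integers such that $l\ge3$ is odd, $\gcd(l,e)=1$, and $q-1=ls$. If $P(x)=x^r(x^{es}+1)$ is a permutation polynomial of $\mathbb{F}_q$, then $\gcd(r,s)=1$, $p\mid 2^s-1$, and $l\nmid 2r+es$.
   Context: A permutation polynomial of $\mathbb{F}_q$ is a polynomial inducing a bijection $\mathbb{F}_q\to\mathbb{F}_q$. *)

(* Defs.v *)
From mathcomp Require Import all_boot all_order all_algebra all_field.
Set Implicit Arguments. Unset Strict Implicit. Unset Printing Implicit Defensive.
Import GRing.Theory.
Local Open Scope ring_scope.

Definition is_perm_map (F : finFieldType) (f : F -> F) : Prop := bijective f.

Definition Ppoly (F : finFieldType) (r e s : nat) : {poly F} :=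
  'X^r * ('X^(e * s) + 1).

(* Main.v *)
Require Import Defs.
From mathcomp Require Import all_boot all_order all_algebra all_field.
From mathcomp Require Import cyclic ring.
Import GRing.Theory.
Local Open Scope ring_scope.
Lemma gen_exists (F : finFieldType) : exists g : F, (#|F|.-1).-primitive_root g.
Proof.
have n_gt0 : (0 < #|F|.-1)%N.
  have : (1 < #|F|)%N by apply/card_gt1P; exists 0, 1; rewrite eq_sym oner_neq0.
  by case: #|F| => [|[|k]].
suff /hasP[g _ gP] : has (#|F|.-1).-primitive_root (enum (predC1 (0:F))) by exists g.
apply: has_prim_root => //.
- apply/allP => x; rewrite mem_enum /= => xn0.
  rewrite unity_rootE; apply/eqP; apply: (mulIf xn0).
  by rewrite mul1r -exprSr prednK ?expf_card //; move: n_gt0; case: #|F|.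
- exact: enum_uniq.
- by rewrite -cardE cardC1.
Qed.

Lemma prod_unity (F : fieldType) (l : nat) (z : F) :
  l.-primitive_root z -> odd l -> \prod_(0 <= i < l) (z ^+ i + 1) = 2.
Proof.
move=> zP ol.
have := congr1 (fun p => p.[-1]) (factor_Xn_sub_1 zP).
rewrite /= horner_prod !hornerE -signr_odd ol expr1 => H.
have -> : \prod_(0 <= i < l) (z ^+ i + 1) = \prod_(0 <= i < l) - (-1 - z ^+ i).
  by apply: eq_bigr => i _; rewrite opprB opprK.
have -> : \prod_(0 <= i < l) - (-1 - z ^+ i) = \prod_(0 <= i < l) - ('X - (z ^+ i)%:P).[-1].
  by apply: eq_bigr => i _; rewrite !hornerE.
rewrite big_mkord prodrN card_ord.
move: H; rewrite big_mkord => ->.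
by rewrite -signr_odd ol expr1 mulN1r opprB addrC opprK.
Qed.

Lemma prod_period (F : fieldType) (l k : nat) (z : F) :
  l.-primitive_root z ->
  \prod_(0 <= i < l * k) (z ^+ i + 1) = (\prod_(0 <= i < l) (z ^+ i + 1)) ^+ k.
Proof.
move=> zP; elim: k => [|k IH]; first by rewrite muln0 big_geq.
rewrite (@big_cat_nat _ _ _ (l * k)%N) //= ?leq_mul2l ?leqnSn ?orbT // IH exprSr.
congr (_ * _).
rewrite -{1}(add0n (l * k)%N) big_addn mulnS addnK.
apply: eq_bigr => i _; by rewrite exprD exprM (prim_expr_order zP) expr1n mulr1.
Qed.

Theorem theorem4p1 (p m : nat) (F : finFieldType) (l r s e : nat) :
  prime p -> odd p -> (0 < m)%N -> #|F| = (p ^ m)%N ->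
  (0 < l)%N -> (0 < r)%N -> (0 < s)%N -> (0 < e)%N ->
  (3 <= l)%N -> odd l -> coprime l e -> (#|F| - 1)%N = (l * s)%N ->
  is_perm_map (fun x : F => (Ppoly F r e s).[x]) ->
  [/\ coprime r s, (p %| 2 ^ s - 1)%N & ~~ (l %| 2 * r + e * s)%N].
Proof.
move=> pr_p odd_p m_gt0 cardF l_gt0 r_gt0 s_gt0 e_gt0 l3 odd_l cop_le hls /bij_inj Pinj.
have hP x : (Ppoly F r e s).[x] = x ^+ r * (x ^+ (e * s) + 1).
  by rewrite /Ppoly !hornerE.
have inj (x y : F) : x ^+ r * (x ^+ (e * s) + 1) = y ^+ r * (y ^+ (e * s) + 1) -> x = y.
  by move=> H; apply: Pinj; rewrite /= !hP.
have hn : #|F|.-1 = (l * s)%N by rewrite -subn1.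
have [g gP] := gen_exists F; rewrite hn in gP.
have s_even : ~~ odd s.
  have : ~~ odd (#|F| - 1) by rewrite oddB ?cardF ?expn_gt0 ?prime_gt0 // oddX odd_p orbT.
  by rewrite hls oddM odd_l.
have cop_rs : coprime r s.
  pose d := gcdn r s.
  have d_dvd : (d %| l * s)%N by rewrite dvdn_mull // dvdn_gcdr.
  have zP := dvdn_prim_root gP d_dvd.
  set z := g ^+ _ in zP.
  have zr : z ^+ r = 1 by apply/eqP; rewrite -(prim_order_dvd zP) dvdn_gcdl.
  have zs : z ^+ (e * s) = 1 by apply/eqP; rewrite -(prim_order_dvd zP) dvdn_mull // dvdn_gcdr.
  have z1 : z = 1 by apply: inj; rewrite zr zs !expr1n.
  have := prim_order_dvd zP 1; rewrite expr1 z1 eqxx dvdn1 => /eqP.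
  by move=> hd; rewrite /coprime -/d hd.
split => //.
- have r_odd : odd r.
    apply: contraTT cop_rs => re; rewrite /coprime; apply/negP => /eqP hg.
    have : (2 %| gcdn r s)%N by rewrite dvdn_gcd !dvdn2 re s_even.
    by rewrite hg.
  have Pz : 0 ^+ r * (0 ^+ (e * s) + 1) = 0 :> F by rewrite expr0n eqn0Ngt r_gt0 mul0r.
  pose Pi := \prod_(x : F | x != 0) x.
  have hprod : \prod_(x : F | x != 0) (x ^+ r * (x ^+ (e * s) + 1)) = Pi.
    rewrite /Pi [RHS](reindex_inj Pinj) /=. apply: eq_big => x; last by rewrite hP.
    rewrite hP; case: (eqVneq x 0) => [->|xn0]; first by rewrite Pz eqxx.
    by apply/esym/eqP => H; move: xn0; rewrite (inj x 0) ?eqxx // H Pz.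
  rewrite big_split /= prodrXl -/Pi in hprod.
  have Pinz : Pi != 0 by apply/prodf_neq0.
  have Pi2 : Pi * Pi = 1.
    have : \prod_(x : F | x != 0) x^-1 = Pi.
      rewrite /Pi (reindex_inj invr_inj) /=; apply: eq_big => x; last by rewrite invrK.
      by rewrite invr_eq0.
    by rewrite prodfV -/Pi => hPi; rewrite -{2}hPi mulfV.
  have Pir : Pi ^+ r = Pi.
    rewrite -(odd_double_half r) r_odd exprD expr1 -muln2 mulnC exprM expr2 Pi2.
    by rewrite expr1n mulr1.
  have hgen (h : F -> F) : \prod_(x : F | x != 0) h x = \prod_(i < l * s) h (g ^+ i).
    have gnz : g != 0.
      apply/eqP => g0; have := prim_expr_order gP; rewrite g0 expr0n eqn0Ngt muln_gt0 l_gt0 s_gt0 /=.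
      by move/eqP; rewrite eq_sym oner_eq0.
    rewrite -(big_imset h (A := 'I_(l * s)) (h := fun i : 'I_(l * s) => g ^+ i)) /=; last first.
      move=> i j _ _ /eqP; rewrite (eq_prim_root_expr gP) !modn_small // => /eqP.
      exact: val_inj.
    apply: eq_bigl => x; apply/idP/idP => [xn0|].
    + have xn : x ^+ (l * s) = 1.
        apply: (mulIf xn0); rewrite mul1r -exprSr -hn prednK ?expf_card //.
        by rewrite cardF expn_gt0 prime_gt0.
      have [i ->] := prim_rootP gP xn.
      by apply/imsetP; exists i.
    + by case/imsetP => i _ ->; rewrite expf_neq0.
  have zP : l.-primitive_root (g ^+ (s * e)).
    rewrite exprM.
    have wP := dvdn_prim_root gP (dvdn_mulr s (dvdnn l)).
    by rewrite mulKn // in wP; rewrite prim_root_exp_coprime // coprime_sym.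
  have h2s : \prod_(x : F | x != 0) (x ^+ (e * s) + 1) = 2 ^+ s.
    rewrite hgen -(big_mkord xpredT (fun i => (g ^+ i) ^+ (e * s) + 1)).
    rewrite -(@prod_unity _ _ _ zP odd_l) -(@prod_period _ _ s _ zP).
    by apply: eq_bigr => i _; rewrite -!exprM mulnC [(e * s)%N]mulnC.
  rewrite h2s Pir in hprod.
  have h1 : 2 ^+ s = 1 :> F by apply: (mulfI Pinz); rewrite hprod mulr1.
  have pc := card_finPcharP cardF pr_p.
  by rewrite (dvdn_pcharf pc) natrB ?expn_gt0 // natrX h1 subrr.
- apply/negP => hdiv.
  have wP := dvdn_prim_root gP (dvdn_mulr s (dvdnn l)).
  rewrite mulKn // in wP.
  set w := g ^+ s in wP.
  have wnz : w != 0.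
    by apply/eqP => w0; have := prim_expr_order wP; rewrite w0 expr0n eqn0Ngt l_gt0 /= => /eqP; rewrite eq_sym oner_eq0.
  have h2 : w ^+ (2 * r + e * s) = 1 by apply/eqP; rewrite -(prim_order_dvd wP).
  set a := w ^+ r; set b := w ^+ (e * s).
  have anz : a != 0 by rewrite expf_neq0.
  have bnz : b != 0 by rewrite expf_neq0.
  have h2' : a * a * b = 1 by rewrite -h2 exprD mul2n -addnn exprD.
  have ia : a^-1 = a * b by apply: (mulfI anz); rewrite mulfV // mulrA h2'.
  have ib : b^-1 = a * a by apply: (mulfI bnz); rewrite mulfV // mulrC h2'.
  have wi : w^-1 = w.
    apply: inj; rewrite !exprVn -/a -/b ia ib.
    have -> : a * b * (a * a + 1) = (a * a * b) * a + a * b by ring.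
    by rewrite h2' mul1r mulrDr mulr1 addrC.
  have : w ^+ 2 = 1 by rewrite expr2 -{1}wi mulVf.
  move/eqP; rewrite -(prim_order_dvd wP) => /(dvdn_leq (isT : (0 < 2)%N)).
  by rewrite leqNgt (leq_trans _ l3).
Qed.
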